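(* Let $(M,\rho)$ be a complete metric space, let $f,g:M\to\mathbb{R}\cup\{+\infty\}$ be lower semicontinuous, and let $f$ also be proper and bounded below. Then $$\inf_{x\in\operatorname{dom} f}(f(x)-g(x))=\inf_{x\in\operatorname{dom}|\widetilde\nabla f|}(f(x)-g(x)).$$
   Context: $\operatorname{dom} f:=\{x:f(x)<+\infty\}$; on $\operatorname{dom} f$, $f(x)-g(x)\in\mathbb{R}\cup\{-\infty\}$ (equal to $-\infty$ if $g(x)=+\infty$). $[t]^+:=\max\{0,t\}$ (with $[f(x)-f(y)]^+:=0$ if $f(y)=+\infty$). For $x\in\operatorname{dom} f$, the global slope is $|\widetilde\nabla f|(x):=\sup_{y\neq x}\frac{[f(x)-f(y)]^+}{\rho(x,y)}\in[0,+\infty]$, and $\operatorname{dom}|\widetilde\nabla f|:=\{x\in\operatorname{dom} f:\ |\widetilde\nabla f|(x)<+\infty\}$. *)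

(* Defs.v *)
From HB Require Import structures.
From mathcomp Require Import all_boot all_order all_algebra.
From mathcomp Require Import all_classical all_reals ereal.
Set Implicit Arguments. Unset Strict Implicit. Unset Printing Implicit Defensive.
Import Order.TTheory GRing.Theory Num.Theory.
Local Open Scope classical_set_scope.
Local Open Scope ring_scope.
Local Open Scope ereal_scope.

Definition is_metric {R : realType} {M : Type} (rho : M -> M -> R) : Prop :=
  [/\ (forall x y, (0 <= rho x y)%R),
      (forall x y, rho x y = 0%R <-> x = y),
      (forall x y, rho x y = rho y x) &
      (forall x y z, (rho x z <= rho x y + rho y z)%R)].

Definition metric_complete {R : realType} {M : Type} (rho : M -> M -> R) : Prop :=
  forall u : nat -> M,
    (forall e : R, (0 < e)%R -> exists N : nat, forall m n : nat,
        (N <= m)%N -> (N <= n)%N -> (rho (u m) (u n) < e)%R) ->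
    exists x : M, forall e : R, (0 < e)%R -> exists N : nat, forall n : nat,
        (N <= n)%N -> (rho (u n) x < e)%R.

Definition lsc {R : realType} {M : Type} (rho : M -> M -> R) (f : M -> \bar R) : Prop :=
  forall x : M, forall t : R, t%:E < f x ->
    exists d : R, (0 < d)%R /\ forall y : M, (rho x y < d)%R -> t%:E < f y.

Definition edom {R : realType} {M : Type} (f : M -> \bar R) : set M :=
  [set x | f x < +oo].

(* [a - b]^+ , with the convention [a - b]^+ := 0 if b = +oo (a finite) *)
Definition posdiff {R : realType} (a b : \bar R) : R :=
  match b with
  | b'%:E => Num.max 0%R (fine a - b')%R
  | _ => 0%R
  end.

Definition gslope {R : realType} {M : Type} (rho : M -> M -> R) (f : M -> \bar R)
  (x : M) : \bar R :=
  ereal_sup [set ((posdiff (f x) (f y)) / rho x y)%:E | y in [set y | y <> x]].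

Definition dom_gslope {R : realType} {M : Type} (rho : M -> M -> R) (f : M -> \bar R)
  : set M := [set x | f x < +oo /\ gslope rho f x < +oo].

(* Main.v *)
Require Import Defs.
From HB Require Import structures.
From mathcomp Require Import all_boot all_order all_algebra.
From mathcomp Require Import all_classical all_reals ereal lra ring.
Import Order.TTheory GRing.Theory Num.Theory.
Local Open Scope classical_set_scope.
Local Open Scope ring_scope.

Lemma arch_inv (R : realType) (c : R) : 0 < c -> exists j : nat, (j.+1%:R)^-1 < c.
Proof.
move=> c0; exists (Num.truncn c^-1).
have h := truncnS_gt c^-1.
rewrite -[c in _ < c]invrK ltf_pV2 ?posrE ?invr_gt0 ?ltr0n //.
Qed.

Lemma ekeland (R : realType) (M : Type) (rho : M -> M -> R) (D : set M)
  (F : M -> R) (m eps : R) (x : M) :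
  is_metric rho -> metric_complete rho ->
  (forall y s, (D y -> s < F y) -> exists d, 0 < d /\
      forall z, rho y z < d -> (D z -> s < F z)) ->
  (forall z, D z -> m <= F z) -> 0 < eps -> D x ->
  exists y, [/\ D y, F y + eps * rho x y <= F x &
     forall z, D z -> F y <= F z + eps * rho y z].
Proof.
move=> [rho0 rhoeq rhoC rhoT] compl lscF lbF eps0 Dx.
pose S u z := D z /\ F z + eps * rho u z <= F u.
pose e (n : nat) : R := (n.+1%:R)^-1.
have e0 n : 0 < e n by rewrite /e invr_gt0 ltr0n.
have Srefl u : D u -> S u u.
  by move=> Du; split => //; rewrite (proj2 (rhoeq u u) erefl) mulr0 addr0.
have Strans a b c : S a b -> S b c -> S a c.
  move=> [Db Hb] [Dc Hc]; split => //.
  have := rhoT a b c; have := rho0 a b; nra.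
have step : forall p : nat * M, exists v, D p.2 ->
    S p.2 v /\ forall w, S p.2 w -> F v <= F w + e p.1.
  move=> [n u] /=; case: (pselect (D u)) => Du; last by exists u.
  pose A := [set F w | w in S u].
  have hA : has_inf A.
    split; first by exists (F u), u => //; exact: Srefl.
    by exists m => _ [w [Dw _] <-]; exact: lbF.
  have [a [v Sv <-] Hv] := inf_adherent (e0 n) hA.
  exists v => _; split => // w Sw.
  have := ge_inf (proj2 hA) (ex_intro2 _ _ w Sw erefl : A (F w)).
  lra.
have [nx Hnx] := choice step.
pose u := fix u n := match n with 0%N => x | k.+1 => nx (k, u k) end.
have uS k : u k.+1 = nx (k, u k) by [].
have Du n : D (u n).
  elim: n => [|n IH] //; rewrite uS; exact: (proj1 (proj1 (Hnx (n, u n) IH))).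
have Snext n : S (u n) (u n.+1) /\ forall w, S (u n) w -> F (u n.+1) <= F w + e n.
  by rewrite uS; exact: (Hnx (n, u n) (Du n)).
have Sfar n k : S (u n) (u (n + k)%N).
  elim: k => [|k IH]; first by rewrite addn0; exact: Srefl.
  rewrite addnS; exact: Strans IH (proj1 (Snext _)).
have Sge n k : (n <= k)%N -> S (u n) (u k).
  by move=> /subnKC <-; exact: Sfar.
have key j k : (j < k)%N -> eps * rho (u j.+1) (u k) <= e j.
  move=> jk; have [Dk Hk] := Sge j.+1 k jk.
  have := (proj2 (Snext j)) _ (Sge j k (ltnW jk)); lra.
have cauchy : forall c : R, 0 < c -> exists N, forall a b, (N <= a)%N -> (N <= b)%N ->
    rho (u a) (u b) < c.
  move=> c c0.
  have hc : 0 < c * eps / 2 by rewrite divr_gt0 ?mulr_gt0.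
  have [j hj] := @arch_inv _ _ hc.
  exists j.+1 => a b ha hb.
  have h1 := key j a ha; have h2 := key j b hb.
  have T := rhoT (u a) (u j.+1) (u b); rewrite [rho (u a) (u j.+1)]rhoC in T.
  have T2 : eps * rho (u a) (u b) <= eps * rho (u j.+1) (u a) + eps * rho (u j.+1) (u b).
    by rewrite -mulrDr ler_wpM2l // ltW.
  have : eps * rho (u a) (u b) < eps * c.
    have E : eps * c = (c * eps / 2) * 2 by field.
    rewrite E; move: hj h1 h2 T2; rewrite /e; set q := (j.+1%:R)^-1; set r := c * eps / 2.
    lra.
  by rewrite ltr_pM2l.
have [y Hy] := compl u cauchy.
have Sy n : S (u n) y.
  apply: contrapT => nS.
  pose t := F (u n) - eps * rho (u n) y.
  have Pt : D y -> t < F y.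
    by move=> Dy; rewrite ltNge; apply/negP => hle; apply: nS; split => //; rewrite /t in hle; lra.
  have [s [ts Ps]] : exists s, t < s /\ (D y -> s < F y).
    case: (pselect (D y)) => Dy.
      exists ((t + F y) / 2); have := Pt Dy; split; lra.
    by exists (t + 1); split => //; lra.
  have [d [d0 Hd]] := lscF y s Ps.
  have mpos : 0 < Num.min d ((s - t) / eps).
    by rewrite lt_min d0 /= divr_gt0 // subr_gt0.
  have [N HN] := Hy _ mpos.
  have := HN (maxn N n) (leq_maxl _ _); rewrite lt_min => /andP[h1 h2].
  set k := maxn N n in h1 h2.
  have [Dk Hk] := Sge n k (leq_maxr _ _).
  have := Hd (u k); rewrite rhoC => /(_ h1 Dk) sk.
  have T := rhoT (u n) (u k) y.
  have T2 : eps * rho (u n) y <= eps * rho (u n) (u k) + eps * rho (u k) y.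
    by rewrite -mulrDr ler_wpM2l // ltW.
  rewrite ltr_pdivlMr // mulrC in h2.
  rewrite /t in ts h2; lra.
have [Dy _] := Sy 0%N.
exists y; split => //; first exact: (proj2 (Sy 0%N)).
move=> z Dz; rewrite leNgt; apply/negP => hz.
have Szy : S y z by split => //; lra.
have hj : forall j, F y <= F z + e j.
  move=> j; have h1 := (proj2 (Snext j)) z (Strans _ _ _ (Sy j) Szy).
  have [_ h2] := Sy j.+1.
  have := rho0 (u j.+1) y; nra.
have := rho0 y z => hr.
have hp : 0 < F y - F z by have := mulr_ge0 (ltW eps0) hr; lra.
have [j ej] := @arch_inv _ (F y - F z) hp.
move: (hj j) ej; rewrite /e /=; set q := (j.+1%:R)^-1; lra.
Qed.

Local Open Scope ereal_scope.

Lemma key_claim (R : realType) (M : Type) (rho : M -> M -> R)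
  (f g : M -> \bar R) :
  is_metric rho -> metric_complete rho ->
  (forall x, f x != -oo) -> (forall x, g x != -oo) ->
  lsc rho f -> lsc rho g ->
  (exists m : R, forall x, m%:E <= f x) ->
  forall x, f x < +oo -> forall t : R, f x - g x < t%:E ->
  exists y, dom_gslope rho f y /\ f y - g y < t%:E.
Proof.
move=> met compl fN gN lscf lscg [m hm] x fx t hxt.
have [rho0 rhoeq rhoC rhoT] := met.
pose D := [set z | f z < +oo].
pose F z := fine (f z).
have fE z : D z -> f z = (F z)%:E.
  rewrite /D /F /=; move: (fN z); case: (f z) => //.
have lscF : forall y s, (D y -> (s < F y)%R) -> exists d, (0 < d)%R /\
      forall z, (rho y z < d)%R -> (D z -> (s < F z)%R).
  move=> y s hs.
  have hs' : s%:E < f y.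
    case: (pselect (D y)) => Dy; first by rewrite fE // lte_fin hs.
    move: Dy (fN y); rewrite /D /=; case: (f y) => [r| |] // Dy _.
      by exfalso; apply: Dy; exact: ltry.
    exact: ltry.
  have [d [d0 Hd]] := lscf y s hs'.
  exists d; split => // z hz Dz; have := Hd z hz; by rewrite fE // lte_fin.
have lbF z : D z -> (m <= F z)%R by move=> Dz; have := hm z; rewrite fE // lee_fin.
have Dx : D x by [].
pose fv := F x.
have hg : (fv - t)%:E < g x.
  move: hxt (gN x); rewrite fE //; case: (g x) => // [r|] /=.
    by move=> h _; rewrite lte_fin /fv; move: h; rewrite -EFinD lte_fin; lra.
  by move=> _ _; exact: ltry.
have [d [d0 Hd]] := lscg x _ hg.
have mfx : (m <= fv)%R by exact: lbF.
pose eps := ((fv - m + 1) / d)%R.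
have eps0 : (0 < eps)%R by rewrite divr_gt0 //; lra.
have [y [Dy Hxy Hsl]] := @ekeland R M rho D F m eps x met compl lscF lbF eps0 Dx.
have epsd : (eps * d = fv - m + 1)%R by rewrite /eps mulrAC -mulrA divff ?mulr1 // gt_eqF.
have rxy : (rho x y < d)%R.
  have : (eps * rho x y < eps * d)%R by have := lbF y Dy; rewrite /fv in epsd *; lra.
  by rewrite ltr_pM2l.
have gy := Hd y rxy.
have Fyx : (F y <= fv)%R by have := mulr_ge0 (ltW eps0) (rho0 x y); rewrite /fv; lra.
exists y; split.
  split => //.
  apply: (@le_lt_trans _ _ eps%:E); last exact: ltry.
  apply: ge_ereal_sup => _ [z zy <-]; rewrite lee_fin /posdiff.
  have rp : (0 < rho y z)%R.
    rewrite lt_neqAle rho0 andbT eq_sym; apply/eqP => /rhoeq h; apply: zy; by rewrite h.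
  move: (Hsl z) (fN z); rewrite /D /F /=; case: (f z) => [b| |] Hz _; last first.
  - by rewrite mul0r ltW.
  - by rewrite mul0r ltW.
  rewrite ler_pdivrMr // ge_max; apply/andP; split.
    by rewrite mulr_ge0 // ltW.
  have := Hz (ltry b); rewrite /= mulrC; lra.
move: gy (gN y); rewrite fE //; case: (g y) => // [r|] /=.
  by rewrite -EFinB !lte_fin => h _; lra.
by move=> _ _; exact: ltNyr.
Qed.

Theorem lemma2p8 (R : realType) (M : Type) (rho : M -> M -> R)
  (f g : M -> \bar R) :
  is_metric rho -> metric_complete rho ->
  (forall x, f x != -oo) -> (forall x, g x != -oo) ->
  lsc rho f -> lsc rho g ->
  (exists x0, f x0 < +oo) ->
  (exists m : R, forall x, m%:E <= f x) ->
  ereal_inf [set f x - g x | x in edom f] =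
  ereal_inf [set f x - g x | x in dom_gslope rho f].
Proof.
move=> met compl fN gN lscf lscg _ hm.
apply/eqP; rewrite eq_le; apply/andP; split.
  by apply: ereal_inf_le_tmp => _ [z [hz _] <-]; exists z.
apply: le_ereal_inf_tmp => _ [x hx <-].
rewrite leNgt; apply/negP => ha.
set I := ereal_inf _ in ha.
have [t [ht1 ht2]] : exists t : R, f x - g x < t%:E /\ t%:E <= I.
  move: ha; case: I => [s| |] ha.
  - by exists s.
  - move: ha; case: (f x - g x) => [r| |] ha.
    + by exists (r + 1)%R; rewrite lte_fin leey; split => //; lra.
    + by [].
    + by exists 0%R; rewrite leey ltNyr.
  - by move: ha; rewrite ltNge leNye.
have [y [hy hyt]] := @key_claim R M rho f g met compl fN gN lscf lscg hm x hx t ht1.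
have h : I <= f y - g y by apply: ereal_inf_lbound; exists y.
have := lt_le_trans hyt (le_trans ht2 h).
by rewrite ltxx.
Qed.
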